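(* Let $l$ be a prime number and let $a,b,c\in\mathbb{Z}$ satisfy $\gcd(a,b)=1$ and $$(a-b)^4+a^4+(a+b)^4=c^l,$$ equivalently $c^l=3a^4+12a^2b^2+2b^4$. Then $c$ is not divisible by $2$, $3$ or $5$; consequently $a$ is odd and $b$ is not divisible by $3$. *)

(* Defs.v *)
From Stdlib Require Import ZArith Znumtheory.

(* Main.v *)
Require Import Defs.
From Stdlib Require Import ZArith Znumtheory Lia.
Open Scope Z_scope.

Definition ff (a b : Z) := (a - b) ^ 4 + a ^ 4 + (a + b) ^ 4.

Lemma addc p x1 x2 y1 y2 : x1 mod p = y1 mod p -> x2 mod p = y2 mod p ->
  (x1 + x2) mod p = (y1 + y2) mod p.
Proof. intros H1 H2. rewrite Zplus_mod, H1, H2, <- Zplus_mod. reflexivity. Qed.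
Lemma subc p x1 x2 y1 y2 : x1 mod p = y1 mod p -> x2 mod p = y2 mod p ->
  (x1 - x2) mod p = (y1 - y2) mod p.
Proof. intros H1 H2. rewrite Zminus_mod, H1, H2, <- Zminus_mod. reflexivity. Qed.
Lemma mulc p x1 x2 y1 y2 : x1 mod p = y1 mod p -> x2 mod p = y2 mod p ->
  (x1 * x2) mod p = (y1 * y2) mod p.
Proof. intros H1 H2. rewrite Zmult_mod, H1, H2, <- Zmult_mod. reflexivity. Qed.

Lemma ff_mod p a b : ff a b mod p = ff (a mod p) (b mod p) mod p.
Proof.
  unfold ff. assert (E: forall x, x^4 = x*x*x*x) by (intros; ring). rewrite !E.
  repeat (apply subc || apply addc || apply mulc); symmetry; apply Zmod_mod.
Qed.

Lemma pow_S (c : Z) (n : nat) : c ^ Z.of_nat (S n) = c * c ^ Z.of_nat n.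
Proof. rewrite Nat2Z.inj_succ, Z.pow_succ_r; [ring | lia]. Qed.

Lemma prime_pow p c n : prime p -> (p | c ^ Z.of_nat n) -> (p | c).
Proof.
  intros Hp. induction n as [|n IH]; intros H.
  - simpl in H. apply Z.divide_1_r_nonneg in H; [|pose proof (prime_ge_2 p Hp); lia].
    pose proof (prime_ge_2 p Hp); lia.
  - rewrite pow_S in H. destruct (prime_mult p Hp _ _ H); auto.
Qed.

Lemma sq_pow p c n : (p | c) -> (p * p | c ^ Z.of_nat (S (S n))).
Proof.
  intros [k Hk]. rewrite !pow_S. subst c. exists (k*k*(k*p)^Z.of_nat n). ring.
Qed.

Lemma one_pow p c n : (p | c) -> (p | c ^ Z.of_nat (S n)).
Proof. intros [k Hk]. rewrite pow_S. subst c. exists (k*(k*p)^Z.of_nat n). ring. Qed.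

Lemma dmod p x : 0 < p -> (p | x) <-> x mod p = 0.
Proof. intros. symmetry. apply Z.mod_divide. lia. Qed.

Ltac enum x lo := first [ lia | let E := fresh "E" in destruct (Z.eq_dec x lo) as [E|E];
  [ rewrite E in * | let lo' := eval compute in (lo+1) in enum x lo' ] ].

Theorem proposition2p1 (l : nat) (a b c : Z) :
  prime (Z.of_nat l) ->
  Z.gcd a b = 1 ->
  (a - b) ^ 4 + a ^ 4 + (a + b) ^ 4 = c ^ (Z.of_nat l) ->
  ~ (2 | c) /\ ~ (3 | c) /\ ~ (5 | c) /\ Z.odd a = true /\ ~ (3 | b).
Proof.
  intros Hl Hg HN. fold (ff a b) in HN.
  pose proof (prime_ge_2 _ Hl) as Hl2.
  destruct l as [|[|m]]; [simpl in Hl2; lia | simpl in Hl2; lia |].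
  assert (Hnd : forall p, 1 < p -> (p | a) -> (p | b) -> False).
  { intros p Hp Ha Hb. pose proof (Z.gcd_greatest _ _ _ Ha Hb) as H.
    rewrite Hg in H. apply Z.divide_1_r_nonneg in H; lia. }
  assert (Hcase : forall p q, 1 < p -> 1 < q -> (p | q) -> ff a b mod q = 0 ->
     (forall r t, 0 <= r < q -> 0 <= t < q -> ff r t mod q = 0 -> r mod p = 0 /\ t mod p = 0) -> False).
  { intros p q Hp Hq Hpq H Hall. rewrite ff_mod in H.
    destruct (Hall _ _ (Z.mod_pos_bound a q ltac:(lia)) (Z.mod_pos_bound b q ltac:(lia)) H) as [A B].
    apply (Hnd p Hp).
    - rewrite (Z.div_mod a q) by lia. apply Z.divide_add_r.
      apply Z.divide_mul_l; auto. apply dmod; lia.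
    - rewrite (Z.div_mod b q) by lia. apply Z.divide_add_r.
      apply Z.divide_mul_l; auto. apply dmod; lia. }
  assert (Hfin : forall p q, 1 < p -> 1 < q -> (p | q) ->
     (forall r t, 0 <= r < q -> 0 <= t < q -> ff r t mod q = 0 -> r mod p = 0 /\ t mod p = 0) ->
     (p * p | c ^ Z.of_nat (S (S m))) \/ (p = q /\ (p | c ^ Z.of_nat (S (S m)))) ->
     (p * p = q \/ p = q) -> False).
  { intros p q Hp Hq Hpq Hall Hd Hpq2. apply (Hcase p q Hp Hq Hpq); [|exact Hall].
    rewrite HN. apply dmod; [lia|]. destruct Hd as [Hd|[-> Hd]]; [|exact Hd].
    destruct Hpq2 as [<-|<-]; [exact Hd|]. apply (Z.divide_trans _ (p*p)); auto.
    apply Z.divide_factor_l. }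
  assert (N2 : ~ (2 | c)).
  { intros H. apply (Hfin 2 4); try lia. exists 2; reflexivity.
    - intros r t Hr Ht H'. enum r 0; enum t 0; first [ vm_compute in H'; discriminate | split; reflexivity ].
    - left. apply sq_pow; auto. }
  assert (N3 : ~ (3 | c)).
  { intros H. apply (Hfin 3 9); try lia. exists 3; reflexivity.
    - intros r t Hr Ht H'. enum r 0; enum t 0; first [ vm_compute in H'; discriminate | split; reflexivity ].
    - left. apply sq_pow; auto. }
  assert (N5 : ~ (5 | c)).
  { intros H. apply (Hfin 5 5); try lia. apply Z.divide_refl.
    - intros r t Hr Ht H'. enum r 0; enum t 0; first [ vm_compute in H'; discriminate | split; reflexivity ].
    - right. split; auto. apply one_pow; auto. }
  split; [exact N2|]. split; [exact N3|]. split; [exact N5|]. split.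
  - destruct (Z.odd a) eqn:Ho; auto. exfalso. apply N2.
    assert (He : Z.even a = true) by (rewrite <- Z.negb_odd, Ho; reflexivity).
    apply Z.even_spec in He. destruct He as [k Hk].
    apply (prime_pow 2 c (S (S m)) prime_2). rewrite <- HN. apply dmod; [lia|].
    rewrite ff_mod. assert (Ea : a mod 2 = 0) by (rewrite Hk, Z.mul_comm; apply Z.mod_mul; lia). rewrite Ea.
    assert (Hb : 0 <= b mod 2 < 2) by (apply Z.mod_pos_bound; lia).
    enum (b mod 2) 0; reflexivity.
  - intros Hb. apply N3.
    apply (prime_pow 3 c (S (S m)) prime_3). rewrite <- HN. apply dmod; [lia|].
    rewrite ff_mod. assert (Eb : b mod 3 = 0) by (apply dmod; auto; lia). rewrite Eb.
    assert (Ha : 0 <= a mod 3 < 3) by (apply Z.mod_pos_bound; lia).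
    enum (a mod 3) 0; reflexivity.
Qed.
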